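(* The elements of $\mathcal{R}$ with small support generate $\mathcal{R}$, and $\mathcal{R}=[\mathcal{R},\mathcal{R}]$.
   Context: $\mathcal{R}$ is the group of rational homeomorphisms of $\{0,1\}^\omega$: those $f$ for which there is a finite asynchronous binary transducer $(S,s_0,t,o)$ ($S$ finite, $t\colon S\times\{0,1\}\to S$, $o\colon S\times\{0,1\}\to\{0,1\}^*$) with $f(\psi)=o(s_0,\psi)$, where for $\sigma_1\sigma_2\cdots$ one sets $s_1=s_0$, $s_{n+1}=t(s_n,\sigma_n)$ and $o(s_0,\sigma_1\sigma_2\cdots)=o(s_1,\sigma_1)o(s_2,\sigma_2)\cdots$. An element $f$ has small support if there is a proper nonempty clopen subset $E\subseteq\{0,1\}^\omega$ such that $f$ is the identity on the complement of $E$. *)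

(* Defs.v *)
From mathcomp Require Import all_boot.
Set Implicit Arguments. Unset Strict Implicit. Unset Printing Implicit Defensive.

Definition cantor := nat -> bool.

Definition agree (n : nat) (x y : cantor) : Prop := forall i, i < n -> x i = y i.

Definition cantor_open (E : cantor -> Prop) : Prop :=
  forall x, E x -> exists n, forall y, agree n x y -> E y.

Definition cantor_closed (E : cantor -> Prop) : Prop :=
  cantor_open (fun x => ~ E x).

Definition clopen (E : cantor -> Prop) : Prop := cantor_open E /\ cantor_closed E.

Definition cantor_continuous (f : cantor -> cantor) : Prop :=
  forall x n, exists m, forall y, agree m x y -> agree n (f x) (f y).

Definition homeomorphism (f : cantor -> cantor) : Prop :=
  exists g : cantor -> cantor,
    (forall x, g (f x) = x) /\ (forall x, f (g x) = x) /\
    cantor_continuous f /\ cantor_continuous g.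

Section Transducer.
Variables (S : finType) (s0 : S) (t : S -> bool -> S) (o : S -> bool -> seq bool).

(* state_at psi n = s_{n+1} in the paper's 1-based indexing: s_1 = s0,
   s_{n+1} = t(s_n, sigma_n); here psi i is sigma_{i+1}. *)
Fixpoint state_at (psi : cantor) (n : nat) : S :=
  if n is n'.+1 then t (state_at psi n') (psi n') else s0.

Fixpoint out_prefix (psi : cantor) (n : nat) : seq bool :=
  if n is n'.+1 then out_prefix psi n' ++ o (state_at psi n') (psi n') else [::].

(* o(s0, psi) is the infinite word w: all finite partial outputs are prefixes of w,
   and their lengths are unbounded (so the output is genuinely infinite). *)
Definition transducer_output (psi w : cantor) : Prop :=
  (forall n i, i < size (out_prefix psi n) -> nth false (out_prefix psi n) i = w i) /\
  (forall k, exists n, k <= size (out_prefix psi n)).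
End Transducer.

Definition rational_map (f : cantor -> cantor) : Prop :=
  exists (S : finType) (s0 : S) (t : S -> bool -> S) (o : S -> bool -> seq bool),
    forall psi, transducer_output s0 t o psi (f psi).

Definition RH (f : cantor -> cantor) : Prop := homeomorphism f /\ rational_map f.

Definition small_support (f : cantor -> cantor) : Prop :=
  exists E : cantor -> Prop,
    clopen E /\ (exists x, E x) /\ (exists y, ~ E y) /\
    (forall x, ~ E x -> f x = x).

Inductive gen_by (A : (cantor -> cantor) -> Prop) : (cantor -> cantor) -> Prop :=
  | gen_id : gen_by A id
  | gen_mul g h : A g -> gen_by A h -> gen_by A (g \o h)
  | gen_inv g g' h : A g -> (forall x, g (g' x) = x) -> (forall x, g' (g x) = x) ->
      gen_by A h -> gen_by A (g' \o h).

Definition commutator_RH (c : cantor -> cantor) : Prop :=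
  exists a a' b b',
    RH a /\ RH b /\
    (forall x, a (a' x) = x) /\ (forall x, a' (a x) = x) /\
    (forall x, b (b' x) = x) /\ (forall x, b' (b x) = x) /\
    c = a' \o b' \o a \o b.

(* Main.v *)
Require Import Defs.
From Stdlib Require Import Classical ClassicalEpsilon FunctionalExtensionality.
From mathcomp Require Import all_boot zify.
Set Implicit Arguments. Unset Strict Implicit. Unset Printing Implicit Defensive.

Definition app (u : seq bool) (x : cantor) : cantor :=
  fun i => if i < size u then nth false u i else x (i - size u).
Definition drp (k : nat) (x : cantor) : cantor := fun i => x (k + i).
Definition pre (n : nat) (x : cantor) : seq bool := mkseq x n.
Definition z0 : cantor := fun _ => false.

Lemma size_pre n x : size (pre n x) = n.
Proof. by rewrite size_mkseq. Qed.

Lemma nth_pre n x i : i < n -> nth false (pre n x) i = x i.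
Proof. by move=> h; rewrite nth_mkseq. Qed.

Lemma app_cat u v x : app u (app v x) = app (u ++ v) x.
Proof.
apply: functional_extensionality => i; rewrite /app size_cat nth_cat.
case: (ltnP i (size u)) => h1.
  by rewrite (ltn_addr _ h1).
have -> : i - size u < size v = (i < size u + size v) by lia.
case: ifP => // _; congr x; lia.
Qed.

Lemma drp_app u x : drp (size u) (app u x) = x.
Proof.
apply: functional_extensionality => i; rewrite /drp /app.
have -> : size u + i < size u = false by lia.
congr x; lia.
Qed.

Lemma app_pre_drp n x : app (pre n x) (drp n x) = x.
Proof.
apply: functional_extensionality => i; rewrite /drp /app size_pre.
case: ifP => h; first by rewrite nth_pre.
congr x; lia.
Qed.

Lemma app_nil x : app [::] x = x.
Proof. apply: functional_extensionality => i; rewrite /app /=; congr x; lia. Qed.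

Lemma drp_drp j k x : drp j (drp k x) = drp (k + j) x.
Proof. apply: functional_extensionality => i; rewrite /drp; congr x; lia. Qed.

Lemma drp0 x : drp 0 x = x.
Proof. by apply: functional_extensionality => i. Qed.

Lemma pre_ext n x y : (forall i, i < n -> x i = y i) -> pre n x = pre n y.
Proof.
move=> h; apply: (@eq_from_nth _ false); rewrite ?size_pre // => i hi.
by rewrite !nth_pre ?h.
Qed.

Lemma agree_pre n x y : agree n x y <-> pre n x = pre n y.
Proof.
split; first by move=> h; apply: pre_ext.
move=> h i hi; by rewrite -(nth_pre x hi) h nth_pre.
Qed.

Lemma app_lt u x i : i < size u -> app u x i = nth false u i.
Proof. by rewrite /app => ->. Qed.

Lemma app_ge u x i : size u <= i -> app u x i = x (i - size u).
Proof. by rewrite /app; case: ltnP. Qed.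

Lemma pre_app u x : pre (size u) (app u x) = u.
Proof.
apply: (@eq_from_nth _ false); rewrite ?size_pre // => i hi.
by rewrite nth_pre // app_lt.
Qed.

Lemma pre_app_add u x n : pre (size u + n) (app u x) = u ++ pre n x.
Proof.
apply: (@eq_from_nth _ false); rewrite ?size_pre ?size_cat ?size_pre // => i hi.
rewrite nth_pre // nth_cat /app; case: ifP => // h.
by rewrite nth_pre; lia.
Qed.

Lemma app_inj u x y : app u x = app u y -> x = y.
Proof. by move=> h; rewrite -(drp_app u x) h drp_app. Qed.

Lemma agree_app u n x y : agree (size u + n) (app u x) (app u y) <-> agree n x y.
Proof.
split=> h i hi.
  have := h (size u + i); rewrite !app_ge; try lia.
  have -> : size u + i - size u = i by lia.
  by apply; lia.
case: (ltnP i (size u)) => hu; first by rewrite !app_lt.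
by rewrite !app_ge //; apply: h; lia.
Qed.

Lemma agree_mono m n x y : m <= n -> agree n x y -> agree m x y.
Proof. move=> hmn h i hi; apply: h; lia. Qed.

Lemma agree_sym n x y : agree n x y -> agree n y x.
Proof. by move=> h i hi; rewrite h. Qed.

Lemma agree_trans n x y z : agree n x y -> agree n y z -> agree n x z.
Proof. by move=> h1 h2 i hi; rewrite h1 ?h2. Qed.

Lemma agree_app_pre n x y : agree n x (app (pre n x) y).
Proof. by move=> i hi; rewrite app_lt ?size_pre // nth_pre. Qed.

Definition common k (F : cantor -> cantor) := forall x y, agree k (F x) (F y).
Definition nonconst (F : cantor -> cantor) := exists x y, F x <> F y.

Lemma common_mono j k F : j <= k -> common k F -> common j F.
Proof. by move=> h c x y; apply: agree_mono (c x y). Qed.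

Lemma nonconst_bound F : nonconst F -> exists k, ~ common k F.
Proof.
move=> [x [y hxy]].
have [i hi] : exists i, F x i <> F y i.
  apply: NNPP => hn; apply: hxy; apply: functional_extensionality => i.
  by apply: NNPP => h; apply: hn; exists i.
by exists i.+1 => c; apply: hi; apply: c.
Qed.

Lemma lcp_exists F : nonconst F -> exists k, common k F /\ ~ common k.+1 F.
Proof.
move=> /nonconst_bound [k hk]; elim: k hk => [|k IH] hk.
  by exfalso; apply: hk => x y i.
case: (classic (common k F)) => h; first by exists k.
exact: IH.
Qed.

Definition lcpn (F : cantor -> cantor) : nat :=
  match excluded_middle_informative (exists k, common k F /\ ~ common k.+1 F) with
  | left e => proj1_sig (constructive_indefinite_description _ e)
  | right _ => 0 end.

Lemma lcpn_spec F : nonconst F -> common (lcpn F) F /\ ~ common (lcpn F).+1 F.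
Proof.
move=> h; rewrite /lcpn; case: excluded_middle_informative => e.
  by case: constructive_indefinite_description.
by exfalso; apply: e; apply: lcp_exists.
Qed.

Lemma nonconst_of F k : ~ common k F -> nonconst F.
Proof.
move=> h; apply: NNPP => hn; apply: h => x y i hi.
by case: (classic (F x = F y)) => [->//|hxy]; exfalso; apply: hn; exists x, y.
Qed.

Lemma lcpn_ge F k : nonconst F -> common k F -> k <= lcpn F.
Proof.
move=> hF hk; have [h1 h2] := lcpn_spec hF.
case: (leqP k (lcpn F)) => // hlt; exfalso; apply: h2.
exact: common_mono hk.
Qed.

Lemma lcpn_unique F k : common k F -> ~ common k.+1 F -> lcpn F = k.
Proof.
move=> h1 h2; have hF := nonconst_of h2.
have [s1 s2] := lcpn_spec hF.
have := lcpn_ge hF h1.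
case: (leqP (lcpn F) k) => [hle1 hle2|hlt _]; first by lia.
by exfalso; apply: h2; apply: common_mono s1.
Qed.

Definition norm (F : cantor -> cantor) : cantor -> cantor :=
  fun x => drp (lcpn F) (F x).
Definition lcpw (F : cantor -> cantor) : seq bool := pre (lcpn F) (F z0).

Lemma decomp F x : nonconst F -> F x = app (lcpw F) (norm F x).
Proof.
move=> hF; have [c _] := lcpn_spec hF.
rewrite /lcpw /norm.
have -> : pre (lcpn F) (F z0) = pre (lcpn F) (F x) by apply/agree_pre; apply: c.
by rewrite app_pre_drp.
Qed.

Lemma common_app w k G : common (size w + k) (fun x => app w (G x)) <-> common k G.
Proof.
split=> h x y; first by apply/(agree_app w); apply: h.
by apply/agree_app; apply: h.
Qed.

Lemma nonconst_app w G : nonconst (fun x => app w (G x)) <-> nonconst G.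
Proof.
split=> -[x [y h]]; exists x, y.
  by move=> e; apply: h => /=; rewrite e.
by move=> /app_inj.
Qed.

Lemma lcpn_app w G : nonconst G -> lcpn (fun x => app w (G x)) = size w + lcpn G.
Proof.
move=> hG; have [h1 h2] := lcpn_spec hG.
apply: lcpn_unique; first by apply/common_app.
by rewrite -addnS => /common_app.
Qed.

Lemma norm_app w G : nonconst G -> norm (fun x => app w (G x)) = norm G.
Proof.
move=> hG; apply: functional_extensionality => x.
rewrite /norm lcpn_app // -drp_drp drp_app //.
Qed.

Lemma lcpw_app w G : nonconst G -> lcpw (fun x => app w (G x)) = w ++ lcpw G.
Proof. by move=> hG; rewrite /lcpw lcpn_app // pre_app_add. Qed.

Lemma norm_ext F G w : (forall x, F x = app w (G x)) -> nonconst G -> norm F = norm G.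
Proof.
move=> h hG; have -> : F = (fun x => app w (G x)) by apply: functional_extensionality.
exact: norm_app.
Qed.

Lemma norm_common F k : nonconst F -> common k F -> norm (fun x => drp k (F x)) = norm F.
Proof.
move=> hF hk.
have e : forall x, F x = app (pre k (F z0)) (drp k (F x)).
  move=> x; have -> : pre k (F z0) = pre k (F x) by apply/agree_pre; apply: hk.
  by rewrite app_pre_drp.
have hG : nonconst (fun x => drp k (F x)).
  by case: hF => x [y h]; exists x, y => e'; apply: h; rewrite (e x) (e y) e'.
by rewrite (norm_ext e hG).
Qed.

Definition res (f : cantor -> cantor) (u : seq bool) : cantor -> cantor :=
  norm (fun x => f (app u x)).

Definition inj (f : cantor -> cantor) := forall x y, f x = f y -> x = y.

Lemma inj_nonconst f u : inj f -> nonconst (fun x => f (app u x)).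
Proof.
move=> hf; exists z0, (fun _ => true) => /hf /app_inj e.
by have := f_equal (fun g => g 0) e.
Qed.

Lemma res_res f u v : inj f -> res (res f u) v = res f (u ++ v).
Proof.
move=> hf; rewrite /res.
have [hk _] := lcpn_spec (inj_nonconst u hf).
set k := lcpn (fun y => f (app u y)) in hk *.
have hk' : common k (fun x => f (app (u ++ v) x)).
  by move=> x y; rewrite -!app_cat; exact: (hk (app v x) (app v y)).
rewrite -(norm_common (inj_nonconst (u ++ v) hf) hk').
congr norm; apply: functional_extensionality => x.
by rewrite /norm -/k app_cat.
Qed.

Definition fin_family {T : Type} (P : T -> Prop) :=
  exists (I : finType) (L : I -> T), forall x, P x -> exists i, x = L i.

Lemma ff_sub T (P Q : T -> Prop) : fin_family Q -> (forall x, P x -> Q x) -> fin_family P.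
Proof. move=> [I [L h]] hPQ; exists I, L => x /hPQ; exact: h. Qed.

Lemma ff_union T (P Q : T -> Prop) :
  fin_family P -> fin_family Q -> fin_family (fun x => P x \/ Q x).
Proof.
move=> [I [L h]] [J [M k]]; exists (I + J)%type, (fun i => match i with inl a => L a | inr b => M b end).
move=> x [/h [i ->]|/k [j ->]]; [by exists (inl i) | by exists (inr j)].
Qed.

Lemma ff_map T U (P : T -> Prop) (g : T -> U) :
  fin_family P -> fin_family (fun y => exists x, P x /\ y = g x).
Proof.
move=> [I [L h]]; exists I, (fun i => g (L i)) => y [x [/h [i ->] ->]]; by exists i.
Qed.

Lemma ff_map2 T U V (P : T -> Prop) (Q : U -> Prop) (g : T -> U -> V) :
  fin_family P -> fin_family Q -> fin_family (fun y => exists a b, P a /\ Q b /\ y = g a b).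
Proof.
move=> [I [L h]] [J [M k]]; exists (I * J)%type, (fun ij => g (L ij.1) (M ij.2)).
by move=> y [a [b [/h [i ->] [/k [j ->] ->]]]]; exists (i, j).
Qed.

Lemma ff_one T (x0 : T) : fin_family (fun x => x = x0).
Proof. by exists unit, (fun _ => x0) => x ->; exists tt. Qed.

Lemma ff_words d : fin_family (fun w : seq bool => size w <= d).
Proof.
exists ('I_d.+1 * {ffun 'I_d -> bool})%type,
  (fun p : 'I_d.+1 * {ffun 'I_d -> bool} => map (fun j => p.2 j) (take (nat_of_ord p.1) (enum 'I_d))).
move=> w hw; exists (Ordinal (n:=d.+1) (m:=size w) hw, [ffun j : 'I_d => nth false w j]) => /=.
apply: (@eq_from_nth _ false).
  by rewrite size_map size_take size_enum_ord; case: ltnP => //; lia.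
move=> i hi; have hd : 0 < d by lia.
rewrite (nth_map (Ordinal hd)) ?size_take ?size_enum_ord; last first.
  by case: ifP => _; lia.
have hid : i < d by lia.
rewrite nth_take // ffunE.
by rewrite (nth_enum_ord (Ordinal hd) hid).
Qed.

Definition finres (f : cantor -> cantor) := fin_family (fun F => exists u, F = res f u).

Section Trans.
Variables (S : finType) (t : S -> bool -> S) (o : S -> bool -> seq bool).

Fixpoint stw (s : S) (u : seq bool) : S := if u is b :: u' then stw (t s b) u' else s.
Fixpoint outw (s : S) (u : seq bool) : seq bool :=
  if u is b :: u' then o s b ++ outw (t s b) u' else [::].

Lemma state_shift s x n :
  state_at s t x n.+1 = state_at (t s (x 0)) t (drp 1 x) n.
Proof. elim: n => [//|n IH]. change (t (state_at s t x n.+1) (x n.+1) = t (state_at (t s (x 0)) t (drp 1 x) n) (drp 1 x n)). by rewrite IH. Qed.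

Lemma out_shift s x n :
  out_prefix s t o x n.+1 = o s (x 0) ++ out_prefix (t s (x 0)) t o (drp 1 x) n.
Proof.
elim: n => [|n IH]; first by rewrite /= cats0.
change (out_prefix s t o x n.+1 ++ o (state_at s t x n.+1) (x n.+1) =
  o s (x 0) ++ (out_prefix (t s (x 0)) t o (drp 1 x) n ++ o (state_at (t s (x 0)) t (drp 1 x) n) (drp 1 x n))).
by rewrite IH -catA -state_shift.
Qed.

Lemma drp1_cons b u x : drp 1 (app (b :: u) x) = app u x.
Proof. by rewrite -(drp_app [:: b] (app u x)) app_cat. Qed.

Lemma state_app s u x n :
  state_at s t (app u x) (size u + n) = state_at (stw s u) t x n.
Proof.
elim: u s => [|b u IH] s; first by rewrite app_nil.
have -> : size (b :: u) + n = (size u + n).+1 by [].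
by rewrite state_shift drp1_cons IH.
Qed.

Lemma out_app s u x n :
  out_prefix s t o (app u x) (size u + n) = outw s u ++ out_prefix (stw s u) t o x n.
Proof.
elim: u s => [|b u IH] s; first by rewrite app_nil.
have -> : size (b :: u) + n = (size u + n).+1 by [].
by rewrite out_shift drp1_cons IH catA.
Qed.

Lemma out_mono s x n m : exists w, out_prefix s t o x (n + m) = out_prefix s t o x n ++ w.
Proof.
elim: m => [|m IH]; first by exists [::]; rewrite addn0 cats0.
case: IH => w hw; rewrite addnS /= hw; by exists (w ++ o (state_at s t x (n + m)) (x (n + m))); rewrite catA.
Qed.

Lemma out_nth s x n m i : i < size (out_prefix s t o x n) -> i < size (out_prefix s t o x m) ->
  nth false (out_prefix s t o x n) i = nth false (out_prefix s t o x m) i.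
Proof.
wlog le : n m / n <= m.
  move=> W h1 h2; case: (leqP n m) => hnm; first exact: W.
  by symmetry; apply: W => //; lia.
move=> h1 _; have [w hw] := out_mono s x n (m - n).
by rewrite subnKC // in hw; rewrite hw nth_cat h1.
Qed.

Definition Gs (s : S) (x : cantor) : cantor := fun i =>
  match excluded_middle_informative (exists n, i < size (out_prefix s t o x n)) with
  | left e => nth false (out_prefix s t o x (proj1_sig (constructive_indefinite_description _ e))) i
  | right _ => false end.

Lemma Gs_spec s x n i : i < size (out_prefix s t o x n) ->
  Gs s x i = nth false (out_prefix s t o x n) i.
Proof.
move=> h; rewrite /Gs; case: excluded_middle_informative => e; last first.
  by exfalso; apply: e; exists n.
case: constructive_indefinite_description => m hm /=; exact: out_nth.
Qed.

End Trans.

Lemma rat_decomp S s0 t o f :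
  (forall psi, transducer_output (S:=S) s0 t o psi (f psi)) ->
  forall u x, f (app u x) = app (outw t o s0 u) (Gs t o (stw t s0 u) x).
Proof.
move=> H u x; apply: functional_extensionality => i.
have [H1 H2] := H (app u x).
have [n hn] := H2 i.+1.
have [w hw] := out_mono t o s0 (app u x) n (size u).
have hi : i < size (out_prefix s0 t o (app u x) (size u + n)).
  by rewrite addnC hw size_cat; lia.
rewrite -(H1 _ _ hi); move: hi; rewrite out_app nth_cat size_cat => hi.
case: (ltnP i (size (outw t o s0 u))) => h; first by rewrite app_lt.
rewrite app_ge // (Gs_spec (n:=n)) //; lia.
Qed.

Lemma rat_finres f : rational_map f -> inj f -> finres f.
Proof.
move=> [S [s0 [t [o H]]]] hf.
exists S, (fun s => norm (Gs t o s)) => F [u ->]; exists (stw t s0 u).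
have e := rat_decomp H u.
have hG : nonconst (Gs t o (stw t s0 u)).
  have := inj_nonconst u hf.
  rewrite (functional_extensionality _ _ e) => /nonconst_app //.
exact: (norm_ext e hG).
Qed.

Lemma rational_prepend w F : rational_map F -> rational_map (fun x => app w (F x)).
Proof.
move=> [S [s0 [t [o H]]]].
pose t' (s : option S) b := Some (if s is Some s1 then t s1 b else t s0 b).
pose o' (s : option S) b := if s is Some s1 then o s1 b else w ++ o s0 b.
exists (option S : finType), None, t', o' => psi.
have hst : forall n, state_at None t' psi n.+1 = Some (state_at s0 t psi n.+1).
  elim=> [//|n IH].
  change (t' (state_at None t' psi n.+1) (psi n.+1) = Some (t (state_at s0 t psi n.+1) (psi n.+1))).
  by rewrite IH.
have hout : forall n, out_prefix None t' o' psi n.+1 = w ++ out_prefix s0 t o psi n.+1.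
  elim=> [|n IH]; first by [].
  change (out_prefix None t' o' psi n.+1 ++ o' (state_at None t' psi n.+1) (psi n.+1) =
          w ++ (out_prefix s0 t o psi n.+1 ++ o (state_at s0 t psi n.+1) (psi n.+1))).
  by rewrite IH hst catA.
have [H1 H2] := H psi; split.
  case=> [//|n] i; rewrite hout size_cat nth_cat => hi.
  case: (ltnP i (size w)) => h; first by rewrite app_lt.
  by rewrite app_ge // H1 //; lia.
move=> k; have [n hn] := H2 k; exists n.+1; rewrite hout size_cat.
have [v hv] := out_mono t o s0 psi n 1; rewrite addn1 in hv.
by rewrite hv size_cat; lia.
Qed.

Lemma common_drp k j F : common k F -> common j (fun x => drp k (F x)) -> common (k + j) F.
Proof.
move=> h1 h2 x y i hi; case: (ltnP i k) => h; first exact: h1.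
have := h2 x y (i - k); rewrite /drp; have -> : k + (i - k) = i by lia.
by apply; lia.
Qed.

Lemma lcpn_norm F : nonconst F -> lcpn (norm F) = 0.
Proof.
move=> hF; have [h1 h2] := lcpn_spec hF.
apply: lcpn_unique; first by move=> x y i.
by move=> h; apply: h2; rewrite -addn1; apply: common_drp h1 h.
Qed.

Lemma lcpw_ext F G w : (forall x, F x = app w (G x)) -> nonconst G -> lcpw F = w ++ lcpw G.
Proof.
move=> h hG; have -> : F = (fun x => app w (G x)) by apply: functional_extensionality.
exact: lcpw_app.
Qed.

Lemma pre_rcons n x : pre n.+1 x = rcons (pre n x) (x n).
Proof. by rewrite /pre /mkseq -addn1 iotaD map_cat /= -cats1. Qed.

Lemma app_rcons u b x : app (rcons u b) x = app u (app [:: b] x).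
Proof. by rewrite app_cat cats1. Qed.

Lemma cont_drp k f : cantor_continuous f -> cantor_continuous (fun x => drp k (f x)).
Proof.
move=> hf x n; have [m hm] := hf x (k + n); exists m => y /hm h i hi.
by rewrite /drp; apply: h; lia.
Qed.

Lemma finres_rat f : inj f -> cantor_continuous f -> finres f -> rational_map f.
Proof.
move=> hf hc [I [L hL]].
have hL' : forall u, exists i, res f u = L i by move=> u; apply: hL; exists u.
pose f0 := res f [::].
have hf0 : forall x, f x = app (lcpw f) (f0 x).
  move=> x; rewrite /f0 /res.
  have -> : (fun x => f (app [::] x)) = f by apply: functional_extensionality => y; rewrite app_nil.
  apply: decomp; have := inj_nonconst [::] hf.
  by have -> : (fun x => f (app [::] x)) = f by apply: functional_extensionality => y; rewrite app_nil.
have -> : f = (fun x => app (lcpw f) (f0 x)) by apply: functional_extensionality.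
apply: rational_prepend.
have [s0 hs0] := hL' [::].
pose t (i : I) (b : bool) : I :=
  match excluded_middle_informative (exists j, L j = res (L i) [:: b]) with
  | left e => proj1_sig (constructive_indefinite_description _ e) | right _ => i end.
pose o (i : I) (b : bool) := lcpw (fun x => L i (app [:: b] x)).
exists I, s0, t, o => psi.
have resf0 : forall u, res f0 u = res f u by move=> u; rewrite /f0 res_res.
have nc : forall u, nonconst (fun x => f0 (app u x)).
  move=> u; have := inj_nonconst u hf.
  move=> [x [y hxy]]; exists x, y => e; apply: hxy.
  by rewrite (hf0 (app u x)) (hf0 (app u y)) e.
have inv : forall n, L (state_at s0 t psi n) = res f (pre n psi) /\
    out_prefix s0 t o psi n = lcpw (fun x => f0 (app (pre n psi) x)).
  elim=> [|n [IH1 IH2]].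
    split; first by rewrite -hs0.
    rewrite /= /pre /= /lcpw.
    have -> : (fun x => f0 (app [::] x)) = f0 by apply: functional_extensionality => y; rewrite app_nil.
    by rewrite /f0 /res (lcpn_norm (inj_nonconst [::] hf)).
  set s := state_at s0 t psi n.
  have e1 : res (L s) [:: psi n] = res f (pre n.+1 psi).
    by rewrite IH1 res_res // pre_rcons cats1.
  split.
    change (L (t s (psi n)) = res f (pre n.+1 psi)).
    rewrite /t; case: excluded_middle_informative => e.
      by case: constructive_indefinite_description => j /= ->.
    by exfalso; apply: e; have [j hj] := hL' (pre n.+1 psi); exists j; rewrite e1.
  change (out_prefix s0 t o psi n ++ o s (psi n) = lcpw (fun x => f0 (app (pre n.+1 psi) x))).
  rewrite IH2 /o.
  have dec : forall x, f0 (app (pre n.+1 psi) x) =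
      app (lcpw (fun x => f0 (app (pre n psi) x))) (L s (app [:: psi n] x)).
    move=> x; rewrite pre_rcons app_rcons (decomp _ (nc _)) IH1.
    by rewrite -resf0.
  rewrite (@lcpw_ext _ (fun x => L s (app [:: psi n] x)) _ dec) //.
  move: (nc (pre n.+1 psi)) => [x [y hxy]]; exists x, y => e; apply: hxy.
  by rewrite !dec e.
split.
  move=> n i; have [_ ->] := inv n => hi.
  rewrite -{2}(app_pre_drp n psi) (decomp _ (nc (pre n psi))) app_lt //.
move=> k.
have hc0 : cantor_continuous f0.
  have -> : f0 = (fun x => drp (lcpn f) (f x)).
    apply: functional_extensionality => x; rewrite /f0 /res /norm.
    have -> : (fun x => f (app [::] x)) = f by apply: functional_extensionality => y; rewrite app_nil.
    by rewrite app_nil.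
  exact: cont_drp.
have [m hm] := hc0 psi k.
exists m; have [_ ->] := inv m; rewrite /lcpw size_pre.
apply: lcpn_ge; first exact: nc.
move=> x y; apply: (@agree_trans _ _ (f0 psi)).
  by apply: agree_sym; apply: hm; apply: agree_app_pre.
by apply: hm; apply: agree_app_pre.
Qed.

Lemma norm_ext_nc F G w : (forall x, F x = app w (G x)) -> nonconst F -> norm F = norm G.
Proof.
move=> h hF; eapply norm_ext; first exact: h.
move: hF => [x [y hxy]]; exists x, y => e; apply: hxy; by rewrite !h e.
Qed.

Lemma inj_comp f h : inj f -> inj h -> inj (f \o h).
Proof. by move=> hf hh x y /hf /hh. Qed.

Lemma finres_comp f h : inj f -> inj h -> finres f -> finres h -> finres (f \o h).
Proof.
move=> hf hh Ff Fh.
have := ff_map2 (fun A B => norm (fun x => A (B x))) Ff Fh.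
move=> H; eapply ff_sub; first exact: H.
move=> F [u ->].
pose P := lcpw (fun x => h (app u x)).
exists (res f P), (res h u); split; first by exists P.
split; first by exists u.
apply: (@norm_ext_nc _ _ (lcpw (fun y => f (app P y)))); last first.
  exact: (inj_nonconst u (inj_comp hf hh)).
move=> x /=.
by rewrite (decomp x (inj_nonconst u hh)) (decomp _ (inj_nonconst P hf)).
Qed.

Lemma pre_take m n x : m <= n -> pre m x = take m (pre n x).
Proof.
move=> h; apply: (@eq_from_nth _ false); rewrite ?size_take ?size_pre.
  by case: (ltnP m n) => hh; lia.
move=> i hi; rewrite nth_take // !nth_pre //; lia.
Qed.

Lemma fan (Q : seq bool -> Prop) :
  (forall w1 w2, Q (w1 ++ w2) -> Q w1) ->
  (forall x, exists n, ~ Q (pre n x)) ->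
  exists d, forall w, size w = d -> ~ Q w.
Proof.
move=> hpre hx; apply: NNPP => hn.
have H : forall d, exists w, size w = d /\ Q w.
  move=> d; apply: NNPP => h1; apply: hn; exists d => w hw hQ; apply: h1; by exists w.
pose good w := forall k, exists w', size w' = k /\ Q (w ++ w').
have g0 : good [::] by move=> k; have [w hw] := H k; exists w.
have gstep : forall w, good w -> good (rcons w false) \/ good (rcons w true).
  move=> w gw; apply: NNPP => hnn.
  have [n0 hn0] : exists k, ~ exists w', size w' = k /\ Q (rcons w false ++ w').
    apply: not_all_ex_not => h; apply: hnn; by left.
  have [n1 hn1] : exists k, ~ exists w', size w' = k /\ Q (rcons w true ++ w').
    apply: not_all_ex_not => h; apply: hnn; by right.
  have [w' [hs hq]] := gw (maxn n0 n1).+1.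
  case: w' hs hq => [//|b w''] /= [hs] hq.
  have hq' : Q (rcons w b ++ w'') by rewrite -cats1 -catA.
  case: b hq hq' => _ hq'.
    apply: hn1; exists (take n1 w''); split; first by rewrite size_takel //; lia.
    by apply: (hpre _ (drop n1 w'')); rewrite -catA cat_take_drop.
  apply: hn0; exists (take n0 w''); split; first by rewrite size_takel //; lia.
  by apply: (hpre _ (drop n0 w'')); rewrite -catA cat_take_drop.
pose nxt w := if excluded_middle_informative (good (rcons w false)) then rcons w false else rcons w true.
pose br := fix br n := if n is n'.+1 then nxt (br n') else [::].
have gbr : forall n, good (br n).
  elim=> [//|n IH] /=; rewrite /nxt; case: excluded_middle_informative => // h.
  by case: (gstep _ IH).
have sbr : forall n, size (br n) = n.
  by elim=> [//|n IH] /=; rewrite /nxt; case: excluded_middle_informative => ?; rewrite size_rcons IH.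
have brS : forall n, exists b, br n.+1 = rcons (br n) b.
  move=> n; change (exists b, nxt (br n) = rcons (br n) b).
  by rewrite /nxt; case: excluded_middle_informative => ?; eexists.
have nbr : forall n i, i < n -> nth false (br n) i = nth false (br i.+1) i.
  elim=> [//|n IH] i hi.
  have [b hb] := brS n; rewrite hb nth_rcons sbr.
  case: (ltnP i n) => h; first by apply: IH.
  have e : i = n by lia.
  by rewrite e eqxx hb nth_rcons sbr ltnn eqxx.
pose x i := nth false (br i.+1) i.
have px : forall n, pre n x = br n.
  move=> n; apply: (@eq_from_nth _ false); rewrite ?size_pre ?sbr // => i hi.
  by rewrite nth_pre // nbr.
have [n hn0] := hx x; apply: hn0; rewrite px.
have [w' [hs hq]] := gbr n 0; case: w' hs hq => // _; by rewrite cats0.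
Qed.

Definition Inv (R : cantor -> cantor) (w : seq bool) : cantor -> cantor := fun x =>
  match excluded_middle_informative (exists y, R y = app w x) with
  | left e => proj1_sig (constructive_indefinite_description _ e) | right _ => z0 end.

Definition QR (R : cantor -> cantor) (w : seq bool) :=
  exists y z, y 0 <> z 0 /\ pre (size w) (R y) = w /\ pre (size w) (R z) = w.

Lemma QR_pre R w1 w2 : QR R (w1 ++ w2) -> QR R w1.
Proof.
move=> [y [z [h [hy hz]]]]; exists y, z; split => //.
have hle : size w1 <= size (w1 ++ w2) by rewrite size_cat; lia.
by rewrite !(pre_take _ hle) hy hz take_size_cat.
Qed.

Lemma inj_of_inv f g : (forall x, g (f x) = x) -> inj f.
Proof. by move=> h x y e; rewrite -(h x) e h. Qed.

Lemma fan_bound f g u : (forall x, g (f x) = x) -> cantor_continuous g ->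
  exists d, forall w, size w = d -> ~ QR (res f u) w.
Proof.
move=> gf hg; have hf := inj_of_inv gf.
apply: fan; first exact: QR_pre.
move=> x.
pose P := lcpw (fun y => f (app u y)).
have hdec : forall y, f (app u y) = app P (res f u y) by move=> y; apply: decomp; apply: inj_nonconst.
have [m hm] := hg (app P x) (size u).+1.
exists m => -[y [z [hyz [hy hz]]]].
rewrite size_pre in hy hz.
have ay : forall y, pre m (res f u y) = pre m x -> agree (size u).+1 (g (app P x)) (app u y).
  move=> y0 hy0; rewrite -(gf (app u y0)); apply: hm.
  apply: (@agree_mono _ (size P + m)); first by lia.
  rewrite hdec; apply/agree_app; apply/agree_pre; by rewrite hy0.
have h1 := ay y hy; have h2 := ay z hz.
apply: hyz.
have := agree_trans (agree_sym h1) h2 (ltnSn (size u)).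
by rewrite !app_ge // subnn.
Qed.

Lemma pre_app_take n u x : n <= size u -> pre n (app u x) = take n u.
Proof.
move=> h; rewrite (pre_take _ h) pre_app //.
Qed.

Lemma finres_inv f g : (forall x, g (f x) = x) -> (forall x, f (g x) = x) ->
  cantor_continuous g -> finres f -> finres g.
Proof.
move=> gf fg hgc [I [L hL]].
have hf := inj_of_inv gf; have hg := inj_of_inv fg.
pose d (i : I) := match excluded_middle_informative
   (exists d, forall w, size w = d -> ~ QR (L i) w) with
   | left e => proj1_sig (constructive_indefinite_description _ e) | right _ => 0 end.
pose D := \max_(i : I) d i.
have FA : fin_family (fun A => exists i, A = L i) by exists I, L.
have H := ff_map2 Inv FA (ff_words D).
eapply ff_sub; first exact: H.
move=> F [v ->].
have ncv := inj_nonconst v hg.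
pose u := lcpw (fun x => g (app v x)).
have hPhi : forall x, g (app v x) = app u (res g v x) by move=> x; apply: decomp.
pose P := lcpw (fun y => f (app u y)).
have hR : forall y, f (app u y) = app P (res f u y) by move=> y; apply: decomp; apply: inj_nonconst.
have key : forall x, app v x = app P (res f u (res g v x)) by move=> x; rewrite -hR -hPhi fg.
have hsize : size P <= size v.
  case: (leqP (size P) (size v)) => // hlt; exfalso.
  pose x : cantor := fun _ => ~~ nth false P (size v).
  have := f_equal (fun z => z (size v)) (key x).
  by rewrite /= app_ge // app_lt // subnn /x; case: (nth false P (size v)).
pose v' := drop (size P) v.
have hv : v = P ++ v'.
  have := f_equal (pre (size P)) (key z0).
  rewrite pre_app pre_app_take // => e.
  by rewrite -{1}(cat_take_drop (size P) v) e.
have key' : forall x, app v' x = res f u (res g v x).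
  by move=> x; apply: (@app_inj P); rewrite app_cat -hv key.
have injR : forall y1 y2, res f u y1 = res f u y2 -> y1 = y2.
  by move=> y1 y2 e; apply: (@app_inj u); apply: hf; rewrite !hR e.
have hInv : Inv (res f u) v' = res g v.
  apply: functional_extensionality => x; rewrite /Inv.
  case: excluded_middle_informative => e.
    case: constructive_indefinite_description => y /= hy.
    by apply: injR; rewrite hy key'.
  by exfalso; apply: e; exists (res g v x).
have hQ : QR (res f u) v'.
  have [s1 s2] := lcpn_spec ncv.
  have [x1 [x2 hx]] : exists x1 x2, ~ agree 1 (res g v x1) (res g v x2).
    apply: NNPP => hn; apply: s2; rewrite -addn1; apply: common_drp s1 _ => x1 x2.
    by apply: NNPP => hn2; apply: hn; exists x1, x2.
  exists (res g v x1), (res g v x2); split.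
    by move=> e; apply: hx => i hi; have -> : i = 0 by lia.
  by rewrite -!key' !pre_app.
have [i hi] := hL (res f u) (ex_intro _ u erefl).
exists (L i), v'; split; first by exists i.
split; last by rewrite -hi hInv.
have hd : forall w, size w = d i -> ~ QR (L i) w.
  rewrite /d; case: excluded_middle_informative => e.
    by case: constructive_indefinite_description.
  by exfalso; apply: e; rewrite -hi; apply: (fan_bound u gf hgc).
have : size v' < d i.
  case: (ltnP (size v') (d i)) => // hle; exfalso.
  apply: (hd (take (d i) v')); first by rewrite size_takel.
  by apply: (QR_pre (w2 := drop (d i) v')); rewrite cat_take_drop -hi.
have : d i <= D by apply: (leq_bigmax i).
lia.
Qed.

Lemma cont_comp f h : cantor_continuous f -> cantor_continuous h -> cantor_continuous (f \o h).
Proof.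
move=> hf hh x n; have [m1 h1] := hf (h x) n; have [m2 h2] := hh x m1.
by exists m2 => y /h2 /h1.
Qed.

Lemma homeo_inj f : homeomorphism f -> inj f.
Proof. by move=> [g [gf _]]; apply: inj_of_inv gf. Qed.

Lemma homeo_cont f : homeomorphism f -> cantor_continuous f.
Proof. by move=> [g [_ [_ [h _]]]]. Qed.

Lemma RH_iff f : RH f <-> homeomorphism f /\ finres f.
Proof.
split=> -[h1 h2]; split => //.
  by apply: rat_finres => //; apply: homeo_inj.
by apply: finres_rat => //; [apply: homeo_inj | apply: homeo_cont].
Qed.

Lemma homeo_comp f h : homeomorphism f -> homeomorphism h -> homeomorphism (f \o h).
Proof.
move=> [g1 [a1 [b1 [c1 d1]]]] [g2 [a2 [b2 [c2 d2]]]].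
exists (g2 \o g1); split; first by move=> x /=; rewrite a1 a2.
split; first by move=> x /=; rewrite b2 b1.
by split; apply: cont_comp.
Qed.

Lemma RH_comp f h : RH f -> RH h -> RH (f \o h).
Proof.
move=> /RH_iff [hf ff] /RH_iff [hh fh]; apply/RH_iff; split; first exact: homeo_comp.
by apply: finres_comp => //; apply: homeo_inj.
Qed.

Lemma RH_inv f f' : RH f -> (forall x, f (f' x) = x) -> (forall x, f' (f x) = x) -> RH f'.
Proof.
move=> /RH_iff [[g [a [b [c d]]]] ff] e1 e2.
have eg : f' = g.
  by apply: functional_extensionality => x; rewrite -{1}(b x) e2.
subst f'.
apply/RH_iff; split; first by exists f.
exact: (finres_inv e2 e1 d ff).
Qed.

Lemma cont_id : cantor_continuous id.
Proof. by move=> x n; exists n. Qed.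

Lemma nonconst_id : nonconst id.
Proof. by exists z0, (fun _ => true) => /(f_equal (fun z => z 0)). Qed.

Lemma res_app_id u w : norm (fun x => app w (app u x)) = norm id.
Proof.
apply: (@norm_ext _ id (w ++ u)) => //; last exact: nonconst_id.
by move=> x; rewrite app_cat.
Qed.

(* prefix-replacement maps *)
Definition PR d (F : cantor -> cantor) :=
  forall u, size u = d -> exists w, forall y, F (app u y) = app w y.

Lemma PR_cont d F : PR d F -> cantor_continuous F.
Proof.
move=> hF x n; exists (d + n) => y hxy.
have [w hw] := hF (pre d x) (size_pre d x).
have e : pre d y = pre d x by apply/agree_pre; apply: agree_sym; apply: agree_mono hxy; lia.
rewrite -(app_pre_drp d x) -(app_pre_drp d y) e !hw.
apply: (@agree_mono _ (size w + n)); first by lia.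
apply/agree_app => i hi.
have := hxy (d + i); rewrite /drp; apply; lia.
Qed.

Lemma PR_finres d F : PR d F -> finres F.
Proof.
move=> hF.
have H := ff_union (ff_one (norm id)) (ff_map (res F) (ff_words d)).
eapply ff_sub; first exact: H.
move=> G [u ->] /=.
case: (leqP d (size u)) => hu; last by right; exists u; split => //; lia.
left.
have [w hw] := hF (take d u) (size_takel hu).
rewrite /res; apply: (@norm_ext _ id (w ++ drop d u)); last exact: nonconst_id.
by move=> x; rewrite -{1}(cat_take_drop d u) -app_cat hw app_cat.
Qed.

Lemma PR_RH d d' F F' : PR d F -> PR d' F' -> (forall x, F (F' x) = x) ->
  (forall x, F' (F x) = x) -> RH F.
Proof.
move=> h1 h2 e1 e2; apply/RH_iff; split; last exact: PR_finres h1.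
exists F'; split => //; split => //; split; [exact: PR_cont h1 | exact: PR_cont h2].
Qed.

Lemma RH_id : RH id.
Proof.
apply: (@PR_RH 0 0) => // u /size0nil -> ; by exists [::].
Qed.

Lemma app_0 b u y : app (b :: u) y 0 = b.
Proof. by []. Qed.
Lemma app_S b u y i : app (b :: u) y i.+1 = app u y i.
Proof. by rewrite /app /=; case: ifP. Qed.
Lemma drp_S k b u y : drp k.+1 (app (b :: u) y) = drp k (app u y).
Proof. by rewrite -(drp1_cons b u y) drp_drp. Qed.
Lemma app_nil_x y : app [::] y = y.
Proof. exact: app_nil. Qed.
Lemma cat_cons_nil (b : bool) u : (b :: u) ++ [::] = b :: u.
Proof. by rewrite cats0. Qed.

Ltac simp := repeat (rewrite ?app_0 ?app_S ?drp_S ?drp0 ?app_cat ?app_nil_x /=).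

Lemma split3 x : x = app [:: x 0; x 1; x 2] (drp 3 x).
Proof. symmetry; exact: (app_pre_drp 3 x). Qed.
Lemma split2 x : x = app [:: x 0; x 1] (drp 2 x).
Proof. symmetry; exact: (app_pre_drp 2 x). Qed.
Lemma size3 (u : seq bool) : size u = 3 -> exists a b e, u = [:: a; b; e].
Proof. by case: u => [|a [|b [|e []]]] //; exists a, b, e. Qed.
Lemma size2 (u : seq bool) : size u = 2 -> exists a b, u = [:: a; b].
Proof. by case: u => [|a [|b []]] //; exists a, b. Qed.

Definition cmap (x : cantor) : cantor :=
  if x 0 then (if x 1 then (if x 2 then app [:: true; true] (drp 3 x)
                            else app [:: false] (drp 3 x))
               else app [:: true; false; false] (drp 2 x))
  else app [:: true; false; true] (drp 1 x).
Definition cmap' (x : cantor) : cantor :=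
  if x 0 then (if x 1 then app [:: true; true; true] (drp 2 x)
               else (if x 2 then app [:: false] (drp 3 x) else app [:: true; false] (drp 3 x)))
  else app [:: true; true; false] (drp 1 x).

Lemma cmapK x : cmap' (cmap x) = x.
Proof.
rewrite (split3 x); move: (x 0) (x 1) (x 2) (drp 3 x) => a b e y.
by case: a; case: b; case: e; rewrite /cmap /cmap'; simp.
Qed.
Lemma cmapK' x : cmap (cmap' x) = x.
Proof.
rewrite (split3 x); move: (x 0) (x 1) (x 2) (drp 3 x) => a b e y.
by case: a; case: b; case: e; rewrite /cmap /cmap'; simp.
Qed.
Lemma PR_cmap : PR 3 cmap.
Proof.
move=> u /size3 [a [b [e ->]]].
by case: a; case: b; case: e; rewrite /cmap; simp; eexists => y; simp.
Qed.
Lemma PR_cmap' : PR 3 cmap'.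
Proof.
move=> u /size3 [a [b [e ->]]].
by case: a; case: b; case: e; rewrite /cmap'; simp; eexists => y; simp.
Qed.
Lemma RH_cmap : RH cmap.
Proof. exact: (PR_RH PR_cmap PR_cmap' cmapK' cmapK). Qed.
Lemma RH_cmap' : RH cmap'.
Proof. exact: (PR_RH PR_cmap' PR_cmap cmapK cmapK'). Qed.

Definition qmap (x : cantor) : cantor :=
  if x 0 then app [:: true; true] (drp 1 x)
  else if x 1 then app [:: true; false] (drp 2 x) else app [:: false] (drp 2 x).
Definition qmap' (x : cantor) : cantor :=
  if x 0 then (if x 1 then app [:: true] (drp 2 x) else app [:: false; true] (drp 2 x))
  else app [:: false; false] (drp 1 x).

Lemma qmapK x : qmap' (qmap x) = x.
Proof.
rewrite (split2 x); move: (x 0) (x 1) (drp 2 x) => a b y.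
by case: a; case: b; rewrite /qmap /qmap'; simp.
Qed.
Lemma qmapK' x : qmap (qmap' x) = x.
Proof.
rewrite (split2 x); move: (x 0) (x 1) (drp 2 x) => a b y.
by case: a; case: b; rewrite /qmap /qmap'; simp.
Qed.
Lemma PR_qmap : PR 2 qmap.
Proof.
move=> u /size2 [a [b ->]].
by case: a; case: b; rewrite /qmap; simp; eexists => y; simp.
Qed.
Lemma PR_qmap' : PR 2 qmap'.
Proof.
move=> u /size2 [a [b ->]].
by case: a; case: b; rewrite /qmap'; simp; eexists => y; simp.
Qed.
Lemma RH_qmap : RH qmap.
Proof. exact: (PR_RH PR_qmap PR_qmap' qmapK' qmapK). Qed.
Lemma RH_qmap' : RH qmap'.
Proof. exact: (PR_RH PR_qmap' PR_qmap qmapK qmapK'). Qed.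

Definition flip (m : seq bool) (x : cantor) : cantor := fun i => x i (+) nth false m i.

Lemma flipK m x : flip m (flip m x) = x.
Proof. by apply: functional_extensionality => i; rewrite /flip -addbA addbb addbF. Qed.

Lemma PR_flip m : PR (size m) (flip m).
Proof.
move=> u hu; exists (mkseq (fun i => nth false u i (+) nth false m i) (size m)) => y.
apply: functional_extensionality => i; rewrite /flip.
case: (ltnP i (size m)) => hi.
  by rewrite !app_lt ?size_mkseq ?hu // nth_mkseq.
by rewrite !app_ge ?size_mkseq ?hu // (nth_default false hi) addbF.
Qed.

Lemma RH_flip m : RH (flip m).
Proof. exact: (PR_RH (@PR_flip m) (@PR_flip m) (flipK m) (flipK m)). Qed.

Definition K2 (hp : cantor -> cantor) (x : cantor) : cantor :=
  match excluded_middle_informative (exists j, x j) with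
  | left e => app (rcons (nseq (ex_minn e) false) true) (hp (drp (ex_minn e).+1 x))
  | right _ => x end.

Lemma K2_spec hp (x : cantor) j : x j -> (forall i, i < j -> x i = false) ->
  K2 hp x = app (rcons (nseq j false) true) (hp (drp j.+1 x)).
Proof.
move=> hj hmin; rewrite /K2; case: excluded_middle_informative => e; last first.
  by exfalso; apply: e; exists j.
case: ex_minnP => k hk hk'.
have : k = j.
  have := hk' j hj; case: (ltnP k j) => h1 h2; last by lia.
  by have := hmin k h1; rewrite hk.
by move=> ->.
Qed.

Lemma K2_none hp x : (forall j, x j = false) -> K2 hp x = x.
Proof.
move=> h; rewrite /K2; case: excluded_middle_informative => // e.
by exfalso; case: e => j; rewrite h.
Qed.

Lemma rcons_nseq_cons j : rcons (nseq j.+1 false) true = false :: rcons (nseq j false) true.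
Proof. by []. Qed.

Lemma K2_false hp y : K2 hp (app [:: false] y) = app [:: false] (K2 hp y).
Proof.
case: (classic (exists j, y j)) => [[j hj]|hn].
  pose k := ex_minn (ex_intro _ j hj).
  have hk : y k by rewrite /k; case: ex_minnP.
  have hk' : forall i, i < k -> y i = false.
    move=> i hi; apply: negbTE; apply/negP => yi.
    by move: hi; rewrite /k; case: ex_minnP => k0 _ /(_ i yi); lia.
  have e1 : app [:: false] y k.+1 by rewrite app_S app_nil.
  have e2 : forall i, i < k.+1 -> app [:: false] y i = false.
    by case=> [|i] hi //=; rewrite app_S app_nil; apply: hk'.
  rewrite (@K2_spec _ _ k hk hk') (@K2_spec _ _ _ e1 e2).
  by rewrite rcons_nseq_cons drp_S app_cat.
have hn' : forall j, y j = false by move=> j; apply: negbTE; apply/negP => yj; apply: hn; exists j.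
rewrite !K2_none // => -[|j] //=; by rewrite app_S app_nil.
Qed.

Lemma K2_true hp y : K2 hp (app [:: true] y) = app [:: true] (hp y).
Proof. rewrite (@K2_spec _ _ 0) //; by rewrite /= drp_S drp0 app_nil. Qed.

Lemma K2_nseq hp j y : K2 hp (app (nseq j false) y) = app (nseq j false) (K2 hp y).
Proof.
elim: j => [|j IH]; first by rewrite !app_nil.
have -> : nseq j.+1 false = [:: false] ++ nseq j false by [].
by rewrite -!app_cat K2_false IH.
Qed.

Lemma K2_word hp j u y : K2 hp (app (nseq j false ++ true :: u) y) =
  app (rcons (nseq j false) true) (hp (app u y)).
Proof.
rewrite -app_cat -cat1s -app_cat K2_nseq K2_true !app_cat.
by rewrite -cats1.
Qed.

Lemma word_split (u : seq bool) :
  u = nseq (size u) false \/ exists j u', u = nseq j false ++ true :: u'.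
Proof.
elim: u => [|[] u IH]; first by left.
  by right; exists 0, u.
case: IH => [e|[j [u' e]]]; first by left; rewrite /= -e.
by right; exists j.+1, u'; rewrite e.
Qed.

Definition Hm (hp : cantor -> cantor) (x : cantor) : cantor :=
  if x 0 then (if x 1 then x else app [:: true; false] (K2 hp (drp 2 x)))
  else app [:: false] (hp (drp 1 x)).

Lemma Hm_0 hp y : Hm hp (app [:: false] y) = app [:: false] (hp y).
Proof. by rewrite /Hm; simp. Qed.
Lemma Hm_11 hp y : Hm hp (app [:: true; true] y) = app [:: true; true] y.
Proof. by rewrite /Hm; simp. Qed.
Lemma Hm_10 hp y : Hm hp (app [:: true; false] y) = app [:: true; false] (K2 hp y).
Proof. by rewrite /Hm; simp. Qed.

Lemma Hm_0' hp u y : Hm hp (app (false :: u) y) = app [:: false] (hp (app u y)).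
Proof. by rewrite -cat1s -app_cat Hm_0. Qed.
Lemma Hm_11' hp u y : Hm hp (app [:: true, true & u] y) = app [:: true, true & u] y.
Proof. by rewrite -(cat_cons _ [:: true] u) -app_cat Hm_11 app_cat. Qed.
Lemma Hm_10' hp u y : Hm hp (app [:: true, false & u] y) = app [:: true; false] (K2 hp (app u y)).
Proof. by rewrite -(cat_cons _ [:: false] u) -app_cat Hm_10. Qed.
Lemma K2_false' hp u y : K2 hp (app (false :: u) y) = app [:: false] (K2 hp (app u y)).
Proof. by rewrite -cat1s -app_cat K2_false. Qed.
Lemma K2_true' hp u y : K2 hp (app (true :: u) y) = app [:: true] (hp (app u y)).
Proof. by rewrite -cat1s -app_cat K2_true. Qed.
Lemma cmap_0 u y : cmap (app (false :: u) y) = app [:: true; false; true] (app u y).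
Proof. by rewrite /cmap; simp. Qed.
Lemma cmap_10 u y : cmap (app [:: true, false & u] y) = app [:: true; false; false] (app u y).
Proof. by rewrite /cmap; simp. Qed.
Lemma cmap_110 u y : cmap (app [:: true, true, false & u] y) = app [:: false] (app u y).
Proof. by rewrite /cmap; simp. Qed.
Lemma cmap_111 u y : cmap (app [:: true, true, true & u] y) = app [:: true; true] (app u y).
Proof. by rewrite /cmap; simp. Qed.

Definition hpart (h : cantor -> cantor) (y : cantor) : cantor := drp 1 (h (app [:: false] y)).

Lemma split1 x : x = app [:: x 0] (drp 1 x).
Proof. symmetry; exact: (app_pre_drp 1 x). Qed.

Section HSec.
Variables (h hi : cantor -> cantor).
Hypotheses (hK : forall x, hi (h x) = x) (hK' : forall x, h (hi x) = x).
Hypothesis (hfix : forall y, h (app [:: true] y) = app [:: true] y).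

Lemma hi_fix y : hi (app [:: true] y) = app [:: true] y.
Proof. by rewrite -{1}hfix hK. Qed.

Lemma h_false y : h (app [:: false] y) = app [:: false] (hpart h y).
Proof.
rewrite [LHS](split1 (h (app [:: false] y))) /hpart; congr app.
case e : (h (app [:: false] y) 0) => //.
have : h (app [:: false] y) = h (app [:: true] (drp 1 (h (app [:: false] y)))).
  by rewrite hfix [LHS](split1 (h (app [:: false] y))) e.
by move=> /(f_equal hi); rewrite !hK => /(f_equal (fun z => z 0)).
Qed.

Lemma h_cons_true u y : h (app (true :: u) y) = app (true :: u) y.
Proof. by rewrite -cat1s -app_cat hfix. Qed.
Lemma h_cons_false u y : h (app (false :: u) y) = app [:: false] (hpart h (app u y)).
Proof. by rewrite -cat1s -app_cat h_false. Qed.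

Lemma comm_rel x : h (cmap (Hm (hpart h) x)) = Hm (hpart h) (cmap x).
Proof.
rewrite (split3 x); move: (x 0) (x 1) (x 2) (drp 3 x) => a b e y.
by case: a; case: b; case: e; do 3 (rewrite ?Hm_0' ?Hm_10' ?Hm_11' ?cmap_0 ?cmap_10 ?cmap_110 ?cmap_111
  ?h_cons_true ?h_cons_false ?K2_true' ?K2_false' ?app_cat /=); simp.
Qed.
End HSec.

Lemma pre_first (x : cantor) k : x k -> (forall i, i < k -> x i = false) ->
  pre k.+1 x = rcons (nseq k false) true.
Proof.
move=> hk hmin; apply: (@eq_from_nth _ false); rewrite ?size_pre ?size_rcons ?size_nseq //.
move=> i hi; rewrite nth_pre // nth_rcons size_nseq.
case: (ltnP i k) => h1; first by rewrite nth_nseq h1 hmin.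
have -> : i = k by lia.
by rewrite eqxx hk.
Qed.

Lemma first_true (x : cantor) : (exists j, x j) ->
  exists k, x k /\ forall i, i < k -> x i = false.
Proof.
move=> e; exists (ex_minn e); case: ex_minnP => k hk hmin; split => // i hi.
apply: negbTE; apply/negP => xi; have := hmin i xi; lia.
Qed.

Lemma K2_inv hp hpi : (forall y, hpi (hp y) = y) -> forall x, K2 hpi (K2 hp x) = x.
Proof.
move=> e x; case: (classic (exists j, x j)) => [ex|hn].
  have [k [hk hmin]] := first_true ex.
  rewrite (@K2_spec _ _ k hk hmin) -cats1 K2_word app_nil e.
  by rewrite -(pre_first hk hmin) app_pre_drp.
have hn' : forall j, x j = false by move=> j; apply: negbTE; apply/negP => xj; apply: hn; exists j.
by rewrite !K2_none.
Qed.

Lemma Hm_inv hp hpi : (forall y, hpi (hp y) = y) -> forall x, Hm hpi (Hm hp x) = x.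
Proof.
move=> e x; rewrite (split2 x); move: (x 0) (x 1) (drp 2 x) => a b y.
case: a; case: b; rewrite ?Hm_0' ?Hm_10' ?Hm_11' //; rewrite !app_nil ?K2_inv ?e ?app_cat //.
Qed.

Lemma cont_piece F G u w x n : (forall y, F (app u y) = app w (G y)) -> cantor_continuous G ->
  pre (size u) x = u -> exists m, forall y, agree m x y -> agree n (F x) (F y).
Proof.
move=> hF hG hx; have [m' hm'] := hG (drp (size u) x) n.
exists (size u + m') => y hxy.
have hy : pre (size u) y = u.
  have e : pre (size u) x = pre (size u) y by apply/agree_pre; apply: (agree_mono _ hxy); lia.
  by rewrite -e.
rewrite -(app_pre_drp (size u) x) -(app_pre_drp (size u) y) hx hy !hF.
apply: (@agree_mono _ (size w + n)); first by lia.
apply/agree_app; apply: hm' => i hi; rewrite /drp; apply: hxy; lia.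
Qed.

Lemma cont_app w : cantor_continuous (app w).
Proof.
move=> x n; exists n => y hxy; apply: (@agree_mono _ (size w + n)); first lia.
by apply/agree_app.
Qed.

Lemma K2_cont hp : cantor_continuous hp -> cantor_continuous (K2 hp).
Proof.
move=> hc x n; case: (classic (exists j, x j)) => [ex|hn].
  have [k [hk hmin]] := first_true ex.
  apply: (@cont_piece _ (fun y => hp (app [::] y)) (rcons (nseq k false) true) (rcons (nseq k false) true)).
  - by move=> y; rewrite -cats1 K2_word cats1.
  - by have -> : (fun y => hp (app [::] y)) = hp by apply: functional_extensionality => y; rewrite app_nil.
  - by rewrite size_rcons size_nseq pre_first.
have hn' : forall j, x j = false by move=> j; apply: negbTE; apply/negP => xj; apply: hn; exists j.
exists n => y hxy; rewrite K2_none //.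
case: (classic (exists j, y j)) => [ey|hny]; last first.
  have hny' : forall j, y j = false by move=> j; apply: negbTE; apply/negP => yj; apply: hny; exists j.
  by rewrite K2_none.
have [k [hk hmin]] := first_true ey.
rewrite (@K2_spec _ _ k hk hmin) => i hi.
have hik : i < k.
  case: (ltnP i k) => // hle; exfalso.
  have hkn : k < n by lia.
  by have := hxy k hkn; rewrite hn' hk.
by rewrite hn' app_lt ?size_rcons ?size_nseq 1?ltnW // nth_rcons size_nseq hik nth_nseq hik.
Qed.

Lemma Hm_cont hp : cantor_continuous hp -> cantor_continuous (Hm hp).
Proof.
move=> hc x n.
have p1 : pre 1 x = [:: x 0] by [].
have p2 : pre 2 x = [:: x 0; x 1] by [].
case e0 : (x 0).
  case e1 : (x 1).
    apply: (@cont_piece _ id [:: true; true] [:: true; true]); first by move=> y; rewrite Hm_11.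
      exact: cont_id.
    by rewrite /= p2 e0 e1.
  apply: (@cont_piece _ (K2 hp) [:: true; false] [:: true; false]); first by move=> y; rewrite Hm_10.
    exact: K2_cont.
  by rewrite /= p2 e0 e1.
apply: (@cont_piece _ hp [:: false] [:: false]); first by move=> y; rewrite Hm_0.
  exact: hc.
by rewrite /= p1 e0.
Qed.

Lemma hpart_cont h : cantor_continuous h -> cantor_continuous (hpart h).
Proof.
move=> hc; rewrite /hpart.
have -> : (fun y => drp 1 (h (app [:: false] y))) = (fun z => drp 1 (id z)) \o (h \o app [:: false]) by [].
apply: cont_comp; first by apply: cont_drp; exact: cont_id.
apply: cont_comp => //; exact: cont_app.
Qed.

Lemma inj_nonconst_id (F : cantor -> cantor) : inj F -> nonconst F.
Proof.
move=> hF; have := inj_nonconst [::] hF.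
by have -> : (fun x => F (app [::] x)) = F by apply: functional_extensionality => y; rewrite app_nil.
Qed.

Lemma finres_Hm h hi : (forall x, hi (h x) = x) -> (forall x, h (hi x) = x) ->
  (forall y, h (app [:: true] y) = app [:: true] y) -> finres h -> finres (Hm (hpart h)).
Proof.
move=> hK hK' hfix Fh.
have hpK : forall y, hpart hi (hpart h y) = y.
  by move=> y; rewrite {1}/hpart -(h_false hK hfix) hK; exact: (drp_app [:: false] y).
have hpK' : forall y, hpart h (hpart hi y) = y.
  by move=> y; rewrite {1}/hpart -(h_false hK' (hi_fix hK hfix)) hK'; exact: (drp_app [:: false] y).
have ihp : inj (hpart h) := inj_of_inv hpK.
have iK2 : inj (K2 (hpart h)) := inj_of_inv (K2_inv hpK).
have iHm : inj (Hm (hpart h)) := inj_of_inv (Hm_inv hpK).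
have r1 : forall u, res (hpart h) u = res h (false :: u).
  move=> u; rewrite /res; symmetry; apply: (@norm_ext _ _ [:: false]); last exact: inj_nonconst.
  by move=> x; rewrite (h_cons_false hK hfix).
have H := ff_union (ff_union (ff_union Fh (ff_one (norm id))) (ff_one (norm (K2 (hpart h)))))
  (ff_map (res (Hm (hpart h))) (ff_words 1)).
eapply ff_sub; first exact: H.
move=> F [u ->].
case: u => [|[] u]; try (by right; eexists; split; last reflexivity).
  case: u => [|[] u]; try (by right; eexists; split; last reflexivity).
    left; left; right; rewrite /res; apply: (@norm_ext _ id [:: true, true & u]); last exact: nonconst_id.
    by move=> x; rewrite Hm_11'.
  have e1 : res (Hm (hpart h)) [:: true, false & u] = res (K2 (hpart h)) u.
    rewrite /res; apply: (@norm_ext _ _ [:: true; false]); last exact: inj_nonconst.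
    by move=> x; rewrite Hm_10'.
  rewrite e1; case: (word_split u) => [e|[j [u' e]]].
    left; right; rewrite /res e; apply: (@norm_ext _ _ (nseq (size u) false)).
      by move=> x; rewrite K2_nseq.
    exact: inj_nonconst_id.
  left; left; left; exists (false :: u'); rewrite -r1 /res e.
  apply: (@norm_ext _ _ (rcons (nseq j false) true)); last exact: inj_nonconst.
  by move=> x; rewrite K2_word.
left; left; left; exists (false :: u); rewrite /res; congr norm.
apply: functional_extensionality => x; by rewrite Hm_0' (h_cons_false hK hfix).
Qed.

Lemma comm_of_fix1 h : RH h -> (forall y, h (app [:: true] y) = app [:: true] y) -> commutator_RH h.
Proof.
move=> Rh hfix.
have [[hi [hK [hK' [hc hic]]]] Fh] := proj1 (RH_iff h) Rh.
have hpK : forall y, hpart hi (hpart h y) = y.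
  by move=> y; rewrite {1}/hpart -(h_false hK hfix) hK; exact: (drp_app [:: false] y).
have hpK' : forall y, hpart h (hpart hi y) = y.
  by move=> y; rewrite {1}/hpart -(h_false hK' (hi_fix hK hfix)) hK'; exact: (drp_app [:: false] y).
have HK := Hm_inv hpK; have HK' := Hm_inv hpK'.
have RHm : RH (Hm (hpart h)).
  apply/RH_iff; split; last exact: (finres_Hm hK hK' hfix Fh).
  exists (Hm (hpart hi)); split => //; split => //.
  by split; apply: Hm_cont; apply: hpart_cont.
have RHm' : RH (Hm (hpart hi)) := RH_inv RHm HK' HK.
exists (Hm (hpart hi)), (Hm (hpart h)), cmap', cmap.
split; first exact: RHm'. split; first exact: RH_cmap'.
split; first exact: HK. split; first exact: HK'.
split; first exact: cmapK. split; first exact: cmapK'.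
apply: functional_extensionality => x /=.
by rewrite -(comm_rel hK hfix) HK' cmapK'.
Qed.

Lemma gen_single A g : A g -> gen_by A g.
Proof. move=> hg; exact: (gen_mul hg (gen_id A)). Qed.

Lemma gen_comp A f h : gen_by A f -> gen_by A h -> gen_by A (f \o h).
Proof.
move=> hf hh; elim: hf => [|g h1 hg _ IH|g g' h1 hg e1 e2 _ IH] //.
- exact: (gen_mul hg IH).
- exact: (gen_inv hg e1 e2 IH).
Qed.

Lemma comm_conj g p p' : commutator_RH g -> RH p -> (forall x, p (p' x) = x) ->
  (forall x, p' (p x) = x) -> commutator_RH (p' \o g \o p).
Proof.
move=> [a [a' [b [b' [Ra [Rb [e1 [e2 [e3 [e4 ->]]]]]]]]]] Rp pp' p'p.
have Rp' := RH_inv Rp pp' p'p.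
exists (p' \o a \o p), (p' \o a' \o p), (p' \o b \o p), (p' \o b' \o p).
split; first by apply: RH_comp => //; apply: RH_comp.
split; first by apply: RH_comp => //; apply: RH_comp.
split; first by move=> x /=; rewrite pp' e1 p'p.
split; first by move=> x /=; rewrite pp' e2 p'p.
split; first by move=> x /=; rewrite pp' e3 p'p.
split; first by move=> x /=; rewrite pp' e4 p'p.
by apply: functional_extensionality => x /=; rewrite !pp'.
Qed.

Lemma gen_conj f p p' : gen_by commutator_RH f -> RH p -> (forall x, p (p' x) = x) ->
  (forall x, p' (p x) = x) -> gen_by commutator_RH (p' \o f \o p).
Proof.
move=> hf Rp pp' p'p; elim: hf => [|g h1 hg _ IH|g g' h1 hg e1 e2 _ IH].
- have -> : p' \o id \o p = id by apply: functional_extensionality => x /=; rewrite p'p.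
  exact: gen_id.
- have -> : p' \o (g \o h1) \o p = (p' \o g \o p) \o (p' \o h1 \o p).
    by apply: functional_extensionality => x /=; rewrite pp'.
  exact: (gen_mul (comm_conj hg Rp pp' p'p) IH).
- have -> : p' \o (g' \o h1) \o p = (p' \o g' \o p) \o (p' \o h1 \o p).
    by apply: functional_extensionality => x /=; rewrite pp'.
  apply: (gen_inv (comm_conj hg Rp pp' p'p)) => //.
    by move=> x /=; rewrite pp' e1 p'p.
  by move=> x /=; rewrite pp' e2 p'p.
Qed.

Lemma qmap_1 u y : qmap (app (true :: u) y) = app [:: true, true & u] y.
Proof. by rewrite /qmap; simp. Qed.
Lemma qmap'_11 u y : qmap' (app [:: true, true & u] y) = app (true :: u) y.
Proof. by rewrite /qmap'; simp. Qed.

Lemma fix_ones k h : RH h -> (forall y, h (app (nseq k.+1 true) y) = app (nseq k.+1 true) y) ->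
  gen_by commutator_RH h.
Proof.
elim: k h => [|k IH] h Rh hfix.
  by apply: gen_single; apply: comm_of_fix1.
have Rh' : RH (qmap' \o h \o qmap) by apply: RH_comp; [apply: RH_comp => //; exact: RH_qmap'|exact: RH_qmap].
have hfix' : forall y, (qmap' \o h \o qmap) (app (nseq k.+1 true) y) = app (nseq k.+1 true) y.
  move=> y /=; rewrite qmap_1.
  have := hfix y; rewrite /= => ->; by rewrite qmap'_11.
have H := IH _ Rh' hfix'.
have e : h = qmap \o (qmap' \o h \o qmap) \o qmap'.
  by apply: functional_extensionality => x /=; rewrite !qmapK'.
rewrite {1}e; apply: gen_conj; [exact: H | exact: RH_qmap' | exact: qmapK | exact: qmapK'].
Qed.

Lemma flip_ones w y : flip (map negb w) (app (nseq (size w) true) y) = app w y.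
Proof.
apply: functional_extensionality => i; rewrite /flip.
case: (ltnP i (size w)) => hi.
  by rewrite !app_lt ?size_nseq // nth_nseq hi (nth_map false) //; case: (nth false w i).
by rewrite !app_ge ?size_nseq // nth_default ?size_map // addbF.
Qed.

Lemma fix_cyl w h : RH h -> (forall y, h (app w y) = app w y) -> gen_by commutator_RH h.
Proof.
move=> Rh hfix.
case: (size w =P 0) => [/size0nil e|hw].
  have -> : h = id.
    by apply: functional_extensionality => x; have := hfix x; rewrite e app_nil.
  exact: gen_id.
set m := map negb w.
have Rh1 : RH (flip m \o h \o flip m) by apply: RH_comp; [apply: RH_comp => //; exact: RH_flip|exact: RH_flip].
have -> : h = flip m \o (flip m \o h \o flip m) \o flip m.
  by apply: functional_extensionality => x /=; rewrite !flipK.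
apply: gen_conj; [|exact: RH_flip | exact: flipK | exact: flipK].
have [k hk] : exists k, size w = k.+1 by exists (size w).-1; lia.
apply: (@fix_ones k) => // y.
change (flip m (h (flip m (app (nseq k.+1 true) y))) = app (nseq k.+1 true) y).
by rewrite -hk /m flip_ones hfix -(flip_ones w y) flipK.
Qed.

Lemma cont_loc F : (forall x, exists m0 G, cantor_continuous G /\ forall y, agree m0 x y -> F y = G y) ->
  cantor_continuous F.
Proof.
move=> H x n; have [m0 [G [hG he]]] := H x.
have [m1 hm1] := hG x n.
exists (maxn m0 m1) => y hxy.
rewrite (he x) ?(he y); first by apply: hm1; apply: agree_mono hxy; lia.
  by apply: agree_mono hxy; lia.
by move=> i hi.
Qed.

Lemma swap_decomp f : RH f -> (exists x, f x <> x) ->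
  exists g, RH g /\ small_support g /\ small_support (g \o f) /\ (forall y, g (g y) = y) /\
    (exists w, forall y, g (app w y) = app w y) /\ (exists w, forall y, g (f (app w y)) = app w y).
Proof.
move=> Rf [x hx].
have [[fi [fK [fK' [fc fic]]]] Ff] := proj1 (RH_iff f) Rf.
have Rfi : RH fi := RH_inv Rf fK' fK.
have Ffi : finres fi := proj2 (proj1 (RH_iff fi) Rfi).
have Fid : finres id := proj2 (proj1 (RH_iff id) RH_id).
have [j hj] : exists j, f x j <> x j.
  apply: NNPP => hn; apply: hx; apply: functional_extensionality => i.
  by apply: NNPP => h; apply: hn; exists i.
have [m0 hm0] := fc x j.+1.
pose m := maxn m0 j.+2.
pose w := pre m x.
pose inC (y : cantor) : bool := pre m y == w.
have inC_agree : forall y z, agree m y z -> inC y = inC z.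
  move=> y z /agree_pre e; by rewrite /inC e.
have inC_x : inC x by rewrite /inC.
have inC_app : forall y, inC (app w y) by move=> y; rewrite /inC -{1}(size_pre m x) pre_app.
have agree_x : forall y, inC y -> agree m x y.
  by move=> y /eqP e; apply/agree_pre; rewrite e.
have hC : forall y, inC y -> ~~ inC (f y).
  move=> y hy; apply/negP => hfy.
  have a1 := agree_x _ hy; have a2 := agree_x _ hfy.
  have : agree j.+1 (f x) (f y) by apply: hm0; apply: agree_mono a1; lia.
  move=> /(_ j (ltnSn j)) e; apply: hj; rewrite e; symmetry; apply: a2; lia.
pose z := app (rcons (pre j.+1 x) (~~ x j.+1)) z0.
have hz1 : ~~ inC z.
  apply/negP => /agree_x /(_ j.+1) h.
  have : j.+1 < m by lia.
  move=> /h; rewrite /z app_lt ?size_rcons ?size_pre // nth_rcons size_pre ltnn eqxx.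
  by case: (x j.+1).
have hz2 : ~~ inC (fi z).
  apply/negP => hfz.
  have : agree j.+1 (f x) (f (fi z)) by apply: hm0; apply: agree_mono (agree_x _ hfz); lia.
  move=> /(_ j (ltnSn j)); rewrite fK' /z app_lt ?size_rcons ?size_pre // nth_rcons size_pre ltnSn nth_pre //;
  by move=> e; apply: hj.
have loc : forall y, exists n, forall y', agree n y y' -> inC y' = inC y /\ inC (fi y') = inC (fi y).
  move=> y; have [n1 hn1] := fic y m; exists (maxn m n1) => y' hy; split.
    by symmetry; apply: inC_agree; apply: agree_mono hy; lia.
  by symmetry; apply: inC_agree; apply: hn1; apply: agree_mono hy; lia.
pose g y := if inC y then f y else if inC (fi y) then fi y else y.
have gg : forall y, g (g y) = y.
  move=> y; rewrite {2}/g; case e1 : (inC y).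
    by rewrite /g (negbTE (hC _ e1)) fK e1.
  case e2 : (inC (fi y)); first by rewrite /g e2 fK'.
  by rewrite /g e1 e2.
have gc : cantor_continuous g.
  apply: cont_loc => y; have [n hn] := loc y; exists n.
  case e1 : (inC y); first by exists f; split => // y' /hn [a1 _]; rewrite /g a1 e1.
  case e2 : (inC (fi y)); first by exists fi; split => // y' /hn [a1 a2]; rewrite /g a1 a2 e1 e2.
  by exists id; split; [exact: cont_id | move=> y' /hn [a1 a2]; rewrite /g a1 a2 e1 e2].
pose Q (u : seq bool) := exists y1 y2, pre (size u) y1 = u /\ pre (size u) y2 = u /\
  inC (fi y1) /\ ~~ inC (fi y2).
have [d hd] : exists d, forall u, size u = d -> ~ Q u.
  apply: fan.
    move=> w1 w2 [y1 [y2 [e1 [e2 h]]]]; exists y1, y2.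
    have hle : size w1 <= size (w1 ++ w2) by rewrite size_cat; lia.
    by rewrite !(pre_take _ hle) e1 e2 take_size_cat.
  move=> x'; have [n hn] := loc x'; exists n => -[y1 [y2 [e1 [e2 [h1 h2]]]]].
  rewrite size_pre in e1 e2.
  have [_ a1] := hn y1 (proj2 (agree_pre _ _ _) (esym e1)).
  have [_ a2] := hn y2 (proj2 (agree_pre _ _ _) (esym e2)).
  by move: h2; rewrite a2 -a1 h1.
have Fg : finres g.
  pose D := maxn d m.
  have H := ff_union (ff_union (ff_union Ff Ffi) Fid) (ff_map (res g) (ff_words D)).
  eapply ff_sub; first exact: H.
  move=> F [u ->].
  case: (ltnP (size u) D) => hu; first by right; exists u; split => //; lia.
  have u1 : forall y, inC (app u y) = inC (app u z0).
    move=> y; apply: inC_agree; apply: (@agree_mono _ (size u + 0)); first lia.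
    by apply/agree_app.
  have u2 : forall y, inC (fi (app u y)) = inC (fi (app u z0)).
    move=> y; apply: NNPP => hne; apply: (hd (take d u)); first by rewrite size_takel //; lia.
    have hdu : d <= size u by lia.
    case e : (inC (fi (app u y))).
      exists (app u y), (app u z0); rewrite size_takel // !pre_app_take //; do 3 split => //.
      by apply/negP => e'; apply: hne; rewrite e e'.
    exists (app u z0), (app u y); rewrite size_takel // !pre_app_take //; do 3 split => //.
      by apply: NNPP => e'; apply: hne; rewrite e; move/negP: e'; case: (inC _).
    by rewrite e.
  left; case e1 : (inC (app u z0)).
    left; left; exists u; rewrite /res; congr norm; apply: functional_extensionality => y.
    by rewrite /g u1 e1.
  case e2 : (inC (fi (app u z0))).
    left; right; exists u; rewrite /res; congr norm; apply: functional_extensionality => y.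
    by rewrite /g u1 e1 u2 e2.
  right; exists u; rewrite /res; congr norm; apply: functional_extensionality => y.
  by rewrite /g u1 e1 u2 e2.
have Rg : RH g.
  apply/RH_iff; split => //; exists g; by do 3 split => //.
have clop : forall E : cantor -> Prop, (forall y, exists n, forall y', agree n y y' -> (E y' <-> E y)) -> clopen E.
  move=> E hE; split => y hy; have [n hn] := hE y; exists n => y' /hn e.
    by apply/e.
  by move=> /e.
exists g; split => //.
split.
  exists (fun y => inC y \/ inC (fi y)); split.
    apply: clop => y; have [n hn] := loc y; exists n => y' /hn [-> ->]; done.
  split; first by exists x; left.
  split; first by exists z => -[h|h]; [move: hz1 | move: hz2]; rewrite h.
  by move=> y hy; rewrite /g; case e1 : (inC y); [exfalso; apply: hy; left|];
     case e2 : (inC (fi y)) => //; exfalso; apply: hy; right.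
split.
  exists (fun y => ~~ inC y); split.
    apply: clop => y; exists m => y' /inC_agree ->; done.
  split; first by exists z.
  split; first by exists x; rewrite inC_x.
  move=> y hy0; have hy : inC y by move: hy0; case: (inC y).
  by rewrite /= /g (negbTE (hC _ hy)) fK hy.
split => //.
split.
  have [n hn] := loc z; exists (pre n z) => y.
  have [a1 a2] := hn (app (pre n z) y) (@agree_app_pre n z y).
  by rewrite /g a1 a2 (negbTE hz1) (negbTE hz2).
exists w => y; rewrite /g (negbTE (hC _ (inC_app y))) fK inC_app //.
Qed.

Lemma RH_comm g : commutator_RH g -> RH g.
Proof.
move=> [a [a' [b [b' [Ra [Rb [e1 [e2 [e3 [e4 ->]]]]]]]]]].
have Ra' := RH_inv Ra e1 e2; have Rb' := RH_inv Rb e3 e4.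
by apply: RH_comp => //; apply: RH_comp => //; apply: RH_comp.
Qed.

Lemma not_moved (f : cantor -> cantor) : ~ (exists x, f x <> x) -> f = id.
Proof.
move=> h; apply: functional_extensionality => x; apply: NNPP => hx; apply: h; by exists x.
Qed.

Theorem proposition2p8 :
  (forall f : cantor -> cantor,
     RH f <-> gen_by (fun g => RH g /\ small_support g) f) /\
  (forall f : cantor -> cantor,
     RH f <-> gen_by commutator_RH f).
Proof.
split=> f; split.
- move=> Rf; case: (classic (exists x, f x <> x)) => [ex|hn]; last first.
    by rewrite (not_moved hn); apply: gen_id.
  have [g [Rg [sg [sgf [gg _]]]]] := swap_decomp Rf ex.
  have -> : f = g \o ((g \o f) \o id) by apply: functional_extensionality => x /=; rewrite gg.
  apply: gen_mul; first by split.
  apply: gen_mul; last exact: gen_id.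
  by split => //; apply: RH_comp.
- elim=> [|g h [Rg _] _ IH|g g' h [Rg _] e1 e2 _ IH]; first exact: RH_id.
    exact: RH_comp.
  by apply: RH_comp => //; apply: (RH_inv Rg).
- move=> Rf; case: (classic (exists x, f x <> x)) => [ex|hn]; last first.
    by rewrite (not_moved hn); apply: gen_id.
  have [g [Rg [_ [_ [gg [[w1 h1] [w2 h2]]]]]]] := swap_decomp Rf ex.
  have -> : f = g \o (g \o f) by apply: functional_extensionality => x /=; rewrite gg.
  apply: gen_comp; first exact: (fix_cyl Rg h1).
  apply: (@fix_cyl w2) => //; exact: RH_comp.
- elim=> [|g h hg _ IH|g g' h hg e1 e2 _ IH]; first exact: RH_id.
    by apply: RH_comp => //; apply: RH_comm.
  by apply: RH_comp => //; apply: (RH_inv (RH_comm hg)).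
Qed.
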